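(* Let $\mathscr{A}$ be a monoidal category with unit object $I$, let $T=(T,\mu,\eta)$ be a monoidal monad on $\mathscr{A}$, and let $(G,\zeta,\delta,\varepsilon)$ be an opmonoidal mixed opwreath around $T$. Then the monoid $\mathrm{mkl}(G,\zeta,T)(I,I)=\mathscr{A}(GI,TI)$ of endomorphisms of $I$ in the category $\mathrm{mkl}(G,\zeta,T)$ is commutative.
   Context: A monoidal monad on $\mathscr{A}$ is a monad $T$ with a lax monoidal structure $\phi_{X,Y}\colon TX\otimes TY\to T(X\otimes Y)$, $\phi_0\colon I\to TI$ such that $\mu$ and $\eta$ are monoidal natural transformations. The Kleisli category $\mathscr{A}_T$ (objects of $\mathscr{A}$, morphisms $X\to Y$ are morphisms $X\to TY$ of $\mathscr{A}$, composite of $f\colon X\to TY$ and $g\colon Y\to TZ$ is $\mu_Z\circ Tg\circ f$) is then monoidal with tensor of objects as in $\mathscr{A}$, tensor of $f\colon X\to TY$, $f'\colon X'\to TY'$ equal to $\phi_{Y,Y'}\circ(f\otimes f')$, and unit $I$. A mixed opwreath around $T$ is an endofunctor $G$ of $\mathscr{A}$ with natural transformations $\zeta\colon GT\Rightarrow TG$, $\delta\colon G\Rightarrow TGG$, $\varepsilon\colon G\Rightarrow T$ satisfying: $\zeta\circ G\mu=\mu G\circ T\zeta\circ\zeta T$; $\zeta\circ G\eta=\eta G$; $\mu\circ\varepsilon T=\mu\circ T\varepsilon\circ\zeta$; $\mu GG\circ T\zeta G\circ TG\zeta\circ\delta T=\mu GG\circ T\delta\circ\zeta$; $\mu GGG\circ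 T\delta G\circ\delta=\mu GGG\circ T\zeta GG\circ TG\delta\circ\delta$; $\mu G\circ T\varepsilon G\circ\delta=\eta G$; $\mu G\circ T\zeta\circ TG\varepsilon\circ\delta=\eta G$ (juxtaposition denotes composition/whiskering of functors and transformations). It induces a lifted comonad $\bar G$ on $\mathscr{A}_T$: $\bar G X=GX$, $\bar G f=\zeta_Y\circ Gf\colon GX\to TGY$ for $f\colon X\to TY$, comultiplication $\bar\delta_X=\delta_X\colon GX\to TGGX$ and counit $\bar\varepsilon_X=\varepsilon_X\colon GX\to TX$ (as Kleisli morphisms). The mixed opwreath is opmonoidal when $\bar G$ is equipped with an opmonoidal comonad structure on the monoidal category $\mathscr{A}_T$, i.e. $\bar G$ is an opmonoidal functor (natural Kleisli morphisms $\psi_{X,X'}\colon G(X\otimes X')\to T(GX\otimes GX')$ and $\psi_0\colon GI\to TI$, coassociative and counital) and $\bar\delta$, $\bar\varepsilon$ are opmonoidal natural transformations. The category $\mathrm{mkl}(G,\zeta,T)$ has the objects of $\mathscr{A}$, hom-sets $\mathrm{mkl}(G,\zeta,T)(X,Y)=\mathscr{A}(GX,TY)$, identity on $X$ equal to $\varepsilon_X$, and composite of $f\colon GX\to TY$ and $g\colon GY\to TZ$ given by the wreath convolution $\mu^{(3)}_Z\circ TTg\circ T\zeta_Y\circ TGf\circ\delta_X$, where $\mu^{(3)}=\mu\circ T\mu\colon TTT\Rightarrow T$. *)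

(* Defs.v *)
Set Implicit Arguments.
Unset Strict Implicit.

Record Category := {
  Ob :> Type;
  Hom : Ob -> Ob -> Type;
  cid : forall X, Hom X X;
  comp : forall X Y Z, Hom Y Z -> Hom X Y -> Hom X Z;
  comp_id_l : forall X Y (f : Hom X Y), comp (cid Y) f = f;
  comp_id_r : forall X Y (f : Hom X Y), comp f (cid X) = f;
  comp_assoc : forall X Y Z W (f : Hom X Y) (g : Hom Y Z) (h : Hom Z W),
      comp h (comp g f) = comp (comp h g) f
}.
Arguments Hom {c} X Y.
Arguments cid {c} X.
Arguments comp {c X Y Z} g f.

Declare Scope cat_scope.
Delimit Scope cat_scope with cat.
Open Scope cat_scope.
Notation "g ∘ f" := (comp g f) (at level 40, left associativity) : cat_scope.

Record Monoidal (C : Category) := {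
  tens : C -> C -> C;
  tensm : forall X X' Y Y', Hom X Y -> Hom X' Y' -> Hom (tens X X') (tens Y Y');
  tens_id : forall X Y, tensm (cid X) (cid Y) = cid (tens X Y);
  tens_comp : forall X X' Y Y' Z Z' (f : Hom X Y) (g : Hom Y Z)
      (f' : Hom X' Y') (g' : Hom Y' Z'),
      tensm (g ∘ f) (g' ∘ f') = tensm g g' ∘ tensm f f';
  munit : C;
  assoc : forall X Y Z, Hom (tens (tens X Y) Z) (tens X (tens Y Z));
  assoc_inv : forall X Y Z, Hom (tens X (tens Y Z)) (tens (tens X Y) Z);
  assoc_iso1 : forall X Y Z, assoc_inv X Y Z ∘ assoc X Y Z = cid _;
  assoc_iso2 : forall X Y Z, assoc X Y Z ∘ assoc_inv X Y Z = cid _;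
  assoc_nat : forall X X' Y Y' Z Z' (f : Hom X X') (g : Hom Y Y') (h : Hom Z Z'),
      assoc X' Y' Z' ∘ tensm (tensm f g) h
      = tensm f (tensm g h) ∘ assoc X Y Z;
  lunit : forall X, Hom (tens munit X) X;
  lunit_inv : forall X, Hom X (tens munit X);
  lunit_iso1 : forall X, lunit_inv X ∘ lunit X = cid _;
  lunit_iso2 : forall X, lunit X ∘ lunit_inv X = cid _;
  lunit_nat : forall X Y (f : Hom X Y),
      lunit Y ∘ tensm (cid munit) f = f ∘ lunit X;
  runit : forall X, Hom (tens X munit) X;
  runit_inv : forall X, Hom X (tens X munit);
  runit_iso1 : forall X, runit_inv X ∘ runit X = cid _;
  runit_iso2 : forall X, runit X ∘ runit_inv X = cid _;
  runit_nat : forall X Y (f : Hom X Y),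
      runit Y ∘ tensm f (cid munit) = f ∘ runit X;
  pentagon : forall X Y Z W,
      assoc X Y (tens Z W) ∘ assoc (tens X Y) Z W
      = tensm (cid X) (assoc Y Z W) ∘ assoc X (tens Y Z) W
        ∘ tensm (assoc X Y Z) (cid W);
  triangle : forall X Y,
      tensm (cid X) (lunit Y) ∘ assoc X munit Y
      = tensm (runit X) (cid Y)
}.
Arguments tens {C} m X Y.
Arguments tensm {C} m {X X' Y Y'} f g.
Arguments munit {C} m.
Arguments assoc {C} m X Y Z.
Arguments lunit {C} m X.
Arguments runit {C} m X.

Record EndoFunctor (C : Category) := {
  fo : C -> C;
  fm : forall X Y, Hom X Y -> Hom (fo X) (fo Y);
  fm_id : forall X, fm (cid X) = cid (fo X);
  fm_comp : forall X Y Z (f : Hom X Y) (g : Hom Y Z),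
      fm (g ∘ f) = fm g ∘ fm f
}.
Arguments fo {C} e X.
Arguments fm {C} e {X Y} f.

Record Monad (C : Category) := {
  mT : EndoFunctor C;
  mu : forall X, Hom (fo mT (fo mT X)) (fo mT X);
  eta : forall X, Hom X (fo mT X);
  mu_nat : forall X Y (f : Hom X Y),
      fm mT f ∘ mu X = mu Y ∘ fm mT (fm mT f);
  eta_nat : forall X Y (f : Hom X Y), fm mT f ∘ eta X = eta Y ∘ f;
  mu_assoc : forall X, mu X ∘ fm mT (mu X) = mu X ∘ mu (fo mT X);
  mu_eta_l : forall X, mu X ∘ eta (fo mT X) = cid _;
  mu_eta_r : forall X, mu X ∘ fm mT (eta X) = cid _
}.
Arguments mT {C} m.
Arguments mu {C} m X.
Arguments eta {C} m X.

Record MonoidalMonad (C : Category) (M : Monoidal C) := {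
  mmon : Monad C;
  phi : forall X Y, Hom (tens M (fo (mT mmon) X) (fo (mT mmon) Y))
                        (fo (mT mmon) (tens M X Y));
  phi0 : Hom (munit M) (fo (mT mmon) (munit M));
  phi_nat : forall X X' Y Y' (f : Hom X X') (g : Hom Y Y'),
      fm (mT mmon) (tensm M f g) ∘ phi X Y
      = phi X' Y' ∘ tensm M (fm (mT mmon) f) (fm (mT mmon) g);
  phi_assoc : forall X Y Z,
      fm (mT mmon) (assoc M X Y Z) ∘ phi (tens M X Y) Z
         ∘ tensm M (phi X Y) (cid _)
      = phi X (tens M Y Z) ∘ tensm M (cid _) (phi Y Z)
         ∘ assoc M (fo (mT mmon) X) (fo (mT mmon) Y) (fo (mT mmon) Z);
  phi_lunit : forall X,
      fm (mT mmon) (lunit M X) ∘ phi (munit M) X ∘ tensm M phi0 (cid _)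
      = lunit M (fo (mT mmon) X);
  phi_runit : forall X,
      fm (mT mmon) (runit M X) ∘ phi X (munit M) ∘ tensm M (cid _) phi0
      = runit M (fo (mT mmon) X);
  eta_monoidal : forall X Y,
      phi X Y ∘ tensm M (eta mmon X) (eta mmon Y) = eta mmon (tens M X Y);
  eta_monoidal0 : eta mmon (munit M) = phi0;
  (* mu : TT => T is monoidal (TT with structure  T phi . phi_{T-,T-}, T phi0 . phi0) *)
  mu_monoidal : forall X Y,
      mu mmon (tens M X Y) ∘ fm (mT mmon) (phi X Y)
         ∘ phi (fo (mT mmon) X) (fo (mT mmon) Y)
      = phi X Y ∘ tensm M (mu mmon X) (mu mmon Y);
  mu_monoidal0 : mu mmon (munit M) ∘ fm (mT mmon) phi0 ∘ phi0 = phi0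
}.
Arguments mmon {C M} m.
Arguments phi {C M} m X Y.
Arguments phi0 {C M} m.

Section Kleisli.
Context {C : Category} {M : Monoidal C} (T : MonoidalMonad M).
Definition TT (X : C) : C := fo (mT (mmon T)) X.
Definition Tm {X Y : C} (f : Hom X Y) : Hom (TT X) (TT Y) := fm (mT (mmon T)) f.

Definition kcomp {X Y Z : C} (g : Hom Y (TT Z)) (f : Hom X (TT Y)) : Hom X (TT Z) :=
  mu (mmon T) Z ∘ Tm g ∘ f.
Definition kid (X : C) : Hom X (TT X) := eta (mmon T) X.
Definition ktens {X X' Y Y' : C} (f : Hom X (TT Y)) (f' : Hom X' (TT Y')) :
  Hom (tens M X X') (TT (tens M Y Y')) := phi T Y Y' ∘ tensm M f f'.
(* structure isomorphisms of A_T: images of those of A under the free functor *)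
Definition kassoc (X Y Z : C) : Hom (tens M (tens M X Y) Z) (TT (tens M X (tens M Y Z))) :=
  eta (mmon T) _ ∘ assoc M X Y Z.
Definition klunit (X : C) : Hom (tens M (munit M) X) (TT X) := eta (mmon T) _ ∘ lunit M X.
Definition krunit (X : C) : Hom (tens M X (munit M)) (TT X) := eta (mmon T) _ ∘ runit M X.
End Kleisli.
Arguments TT {C M} T X.
Arguments Tm {C M} T {X Y} f.
Arguments kcomp {C M} T {X Y Z} g f.
Arguments kid {C M} T X.
Arguments ktens {C M} T {X X' Y Y'} f f'.
Arguments kassoc {C M} T X Y Z.
Arguments klunit {C M} T X.
Arguments krunit {C M} T X.

Record MixedOpwreath (C : Category) (M : Monoidal C) (T : MonoidalMonad M) := {
  wG : EndoFunctor C;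
  zeta : forall X, Hom (fo wG (TT T X)) (TT T (fo wG X));
  delta : forall X, Hom (fo wG X) (TT T (fo wG (fo wG X)));
  eps : forall X, Hom (fo wG X) (TT T X);
  zeta_nat : forall X Y (f : Hom X Y),
      Tm T (fm wG f) ∘ zeta X = zeta Y ∘ fm wG (Tm T f);
  delta_nat : forall X Y (f : Hom X Y),
      Tm T (fm wG (fm wG f)) ∘ delta X = delta Y ∘ fm wG f;
  eps_nat : forall X Y (f : Hom X Y), Tm T f ∘ eps X = eps Y ∘ fm wG f;
  ow1 : forall X, zeta X ∘ fm wG (mu (mmon T) X)
        = mu (mmon T) (fo wG X) ∘ Tm T (zeta X) ∘ zeta (TT T X);
  ow2 : forall X, zeta X ∘ fm wG (eta (mmon T) X) = eta (mmon T) (fo wG X);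
  ow3 : forall X, mu (mmon T) X ∘ eps (TT T X)
        = mu (mmon T) X ∘ Tm T (eps X) ∘ zeta X;
  ow4 : forall X,
      mu (mmon T) (fo wG (fo wG X)) ∘ Tm T (zeta (fo wG X)) ∘ Tm T (fm wG (zeta X))
         ∘ delta (TT T X)
      = mu (mmon T) (fo wG (fo wG X)) ∘ Tm T (delta X) ∘ zeta X;
  ow5 : forall X,
      mu (mmon T) (fo wG (fo wG (fo wG X))) ∘ Tm T (delta (fo wG X)) ∘ delta X
      = mu (mmon T) (fo wG (fo wG (fo wG X))) ∘ Tm T (zeta (fo wG (fo wG X)))
         ∘ Tm T (fm wG (delta X)) ∘ delta X;
  ow6 : forall X, mu (mmon T) (fo wG X) ∘ Tm T (eps (fo wG X)) ∘ delta X
        = eta (mmon T) (fo wG X);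
  ow7 : forall X, mu (mmon T) (fo wG X) ∘ Tm T (zeta X) ∘ Tm T (fm wG (eps X)) ∘ delta X
        = eta (mmon T) (fo wG X)
}.
Arguments wG {C M T} m.
Arguments zeta {C M T} m X.
Arguments delta {C M T} m X.
Arguments eps {C M T} m X.

(* The lifted functor Gbar on A_T: Gbar f = zeta_Y . G f. *)
Definition Gbar {C : Category} {M : Monoidal C} {T : MonoidalMonad M}
  (W : MixedOpwreath T) {X Y : C} (f : Hom X (TT T Y)) :
  Hom (fo (wG W) X) (TT T (fo (wG W) Y)) := zeta W Y ∘ fm (wG W) f.

(* Opmonoidal mixed opwreaths: Gbar is an opmonoidal comonad on the
   monoidal category A_T (all compositions are Kleisli compositions).  *)
Record OpmonoidalMixedOpwreath (C : Category) (M : Monoidal C)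
    (T : MonoidalMonad M) := {
  ow : MixedOpwreath T;
  psi : forall X Y, Hom (fo (wG ow) (tens M X Y))
                        (TT T (tens M (fo (wG ow) X) (fo (wG ow) Y)));
  psi0 : Hom (fo (wG ow) (munit M)) (TT T (munit M));
  psi_nat : forall X X' Y Y' (f : Hom X (TT T X')) (g : Hom Y (TT T Y')),
      kcomp T (ktens T (Gbar ow f) (Gbar ow g)) (psi X Y)
      = kcomp T (psi X' Y') (Gbar ow (ktens T f g));
  psi_coassoc : forall X Y Z,
      kcomp T (kassoc T (fo (wG ow) X) (fo (wG ow) Y) (fo (wG ow) Z))
        (kcomp T (ktens T (psi X Y) (kid T (fo (wG ow) Z))) (psi (tens M X Y) Z))
      = kcomp T (ktens T (kid T (fo (wG ow) X)) (psi Y Z))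
          (kcomp T (psi X (tens M Y Z)) (Gbar ow (kassoc T X Y Z)));
  psi_lcounit : forall X,
      kcomp T (klunit T (fo (wG ow) X))
        (kcomp T (ktens T psi0 (kid T (fo (wG ow) X))) (psi (munit M) X))
      = Gbar ow (klunit T X);
  psi_rcounit : forall X,
      kcomp T (krunit T (fo (wG ow) X))
        (kcomp T (ktens T (kid T (fo (wG ow) X)) psi0) (psi X (munit M)))
      = Gbar ow (krunit T X);
  delta_opmonoidal : forall X Y,
      kcomp T (kcomp T (psi (fo (wG ow) X) (fo (wG ow) Y)) (Gbar ow (psi X Y)))
        (delta ow (tens M X Y))
      = kcomp T (ktens T (delta ow X) (delta ow Y)) (psi X Y);
  delta_opmonoidal0 :
      kcomp T (kcomp T psi0 (Gbar ow psi0)) (delta ow (munit M)) = psi0;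
  eps_opmonoidal : forall X Y,
      kcomp T (ktens T (eps ow X) (eps ow Y)) (psi X Y) = eps ow (tens M X Y);
  eps_opmonoidal0 : kcomp T (kid T (munit M)) (eps ow (munit M)) = psi0
}.
Arguments ow {C M T} o.
Arguments psi {C M T} o X Y.
Arguments psi0 {C M T} o.

(* The category mkl(G, zeta, T): hom-sets A(GX, TY), identity eps_X,
   composite of f : GX -> TY and g : GY -> TZ given by the wreath
   convolution  mu3_Z . TTg . T zeta_Y . TGf . delta_X. *)
Definition mkl_id {C : Category} {M : Monoidal C} {T : MonoidalMonad M}
  (W : MixedOpwreath T) (X : C) : Hom (fo (wG W) X) (TT T X) := eps W X.

Definition mkl_comp {C : Category} {M : Monoidal C} {T : MonoidalMonad M}
  (W : MixedOpwreath T) {X Y Z : C}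
  (f : Hom (fo (wG W) X) (TT T Y)) (g : Hom (fo (wG W) Y) (TT T Z)) :
  Hom (fo (wG W) X) (TT T Z) :=
  mu (mmon T) Z ∘ Tm T (mu (mmon T) Z) ∘ Tm T (Tm T g) ∘ Tm T (zeta W Y)
    ∘ Tm T (fm (wG W) f) ∘ delta W X.
Arguments Gbar {C M T} W {X Y} f.
Arguments mkl_id {C M T} W X.
Arguments mkl_comp {C M T} W {X Y Z} f g.

(* Main.v *)
Require Import Defs.
From Stdlib Require Import Setoid.

Lemma px2 {C : Category} {X Y Z W : C} {a : Hom X Y} {b : Hom Y Z} {c : Hom X Z}
  (E : b ∘ a = c) (x : Hom Z W) : x ∘ b ∘ a = x ∘ c.
Proof. rewrite <- E, comp_assoc. reflexivity. Qed.
Lemma px3 {C : Category} {X Y Z V W : C} {a : Hom X Y} {b : Hom Y Z} {b' : Hom Z V} {c : Hom X V}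
  (E : b' ∘ b ∘ a = c) (x : Hom V W) : x ∘ b' ∘ b ∘ a = x ∘ c.
Proof. rewrite <- E, !comp_assoc. reflexivity. Qed.
Lemma px4 {C : Category} {X Y Z V U W : C} {a : Hom X Y} {b : Hom Y Z} {b' : Hom Z V}
  {b'' : Hom V U} {c : Hom X U}
  (E : b'' ∘ b' ∘ b ∘ a = c) (x : Hom U W) : x ∘ b'' ∘ b' ∘ b ∘ a = x ∘ c.
Proof. rewrite <- E, !comp_assoc. reflexivity. Qed.
Lemma px5 {C : Category} {X Y Z V U U' W : C} {a : Hom X Y} {b : Hom Y Z} {b' : Hom Z V}
  {b'' : Hom V U} {b3 : Hom U U'} {c : Hom X U'}
  (E : b3 ∘ b'' ∘ b' ∘ b ∘ a = c) (x : Hom U' W) : x ∘ b3 ∘ b'' ∘ b' ∘ b ∘ a = x ∘ c.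
Proof. rewrite <- E, !comp_assoc. reflexivity. Qed.

Ltac nrm := repeat rewrite comp_assoc; try unfold TT, Tm.
Ltac rwH H :=
  lazymatch type of H with
  | @eq _ (@comp ?cc _ _ _ _ _) _ =>
    first [ rewrite (px5 (C:=cc) H) | rewrite (px4 (C:=cc) H) | rewrite (px3 (C:=cc) H)
          | rewrite (px2 (C:=cc) H) | rewrite H ]
  | _ => rewrite H
  end.
Tactic Notation "rw" constr(E) :=
  let H := fresh "H" in pose proof E as H; try unfold TT, Tm in H;
  rwH H; clear H; nrm.
Tactic Notation "rw" "<-" constr(E) :=
  let H := fresh "H" in pose proof (eq_sym E) as H; try unfold TT, Tm in H;
  rwH H; clear H; nrm.

Section Kelly.
Context {C : Category} (M : Monoidal C).
Local Notation "f ⊗ g" := (tensm M f g) (at level 35).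
Local Notation I := (munit M).

Lemma tc1 {A X Y Z : C} (f : Hom X Y) (g : Hom Y Z) :
  cid A ⊗ (g ∘ f) = (cid A ⊗ g) ∘ (cid A ⊗ f).
Proof. rewrite <- tens_comp, comp_id_l. reflexivity. Qed.
Lemma tc2 {A X Y Z : C} (f : Hom X Y) (g : Hom Y Z) :
  (g ∘ f) ⊗ cid A = (g ⊗ cid A) ∘ (f ⊗ cid A).
Proof. rewrite <- tens_comp, comp_id_l. reflexivity. Qed.

Lemma tens_inj_l X Y (h k : Hom X Y) : cid I ⊗ h = cid I ⊗ k -> h = k.
Proof.
  intros E.
  assert (H: forall h0 : Hom X Y, h0 = lunit M Y ∘ (cid I ⊗ h0) ∘ lunit_inv M X).
  { intros h0. rewrite lunit_nat, <- comp_assoc, lunit_iso2, comp_id_r. reflexivity. }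
  rewrite (H h), (H k), E. reflexivity.
Qed.

Lemma tens_inj_r X Y (h k : Hom X Y) : h ⊗ cid I = k ⊗ cid I -> h = k.
Proof.
  intros E.
  assert (H: forall h0 : Hom X Y, h0 = runit M Y ∘ (h0 ⊗ cid I) ∘ runit_inv M X).
  { intros h0. rewrite runit_nat, <- comp_assoc, runit_iso2, comp_id_r. reflexivity. }
  rewrite (H h), (H k), E. reflexivity.
Qed.

Lemma lunit_tens X Y : lunit M X ⊗ cid Y = lunit M (tens M X Y) ∘ assoc M I X Y.
Proof.
  apply tens_inj_l.
  set (P := assoc M I (tens M I X) Y ∘ (assoc M I I X ⊗ cid Y)).
  set (Pi := (assoc_inv M I I X ⊗ cid Y) ∘ assoc_inv M I (tens M I X) Y).
  assert (HP : P ∘ Pi = cid _).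
  { unfold P, Pi. nrm. rw <- (tens_comp M (assoc_inv M I I X) (assoc M I I X) (cid Y) (cid Y)).
    rewrite assoc_iso2, comp_id_l, tens_id, comp_id_r, assoc_iso2. reflexivity. }
  assert (E : (cid I ⊗ (lunit M (tens M X Y) ∘ assoc M I X Y)) ∘ P
              = (cid I ⊗ (lunit M X ⊗ cid Y)) ∘ P).
  { unfold P. rewrite tc1. nrm.
    rw <- (pentagon M I I X Y).
    rw (triangle M I (tens M X Y)).
    rewrite <- (tens_id M X Y).
    rw <- (assoc_nat M (runit M I) (cid X) (cid Y)).
    rewrite <- (triangle M I X). rewrite tc2. nrm.
    rw (assoc_nat M (cid I) (lunit M X) (cid Y)). reflexivity. }
  rewrite <- (comp_id_r (cid I ⊗ (lunit M X ⊗ cid Y))).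
  rewrite <- HP, comp_assoc, <- E, <- comp_assoc, HP, comp_id_r. reflexivity.
Qed.

Lemma lunit_II X : lunit M (tens M I X) = cid I ⊗ lunit M X.
Proof.
  assert (E : lunit M X ∘ lunit M (tens M I X) = lunit M X ∘ (cid I ⊗ lunit M X)).
  { rewrite lunit_nat. reflexivity. }
  rewrite <- (comp_id_l (lunit M (tens M I X))), <- (lunit_iso1 M X),
    <- comp_assoc, E, comp_assoc, lunit_iso1, comp_id_l. reflexivity.
Qed.

Lemma lunit_runit : lunit M I = runit M I.
Proof.
  apply tens_inj_r.
  rewrite lunit_tens, <- triangle, lunit_II. reflexivity.
Qed.
End Kelly.

Section Kl.
Context {C : Category} {M : Monoidal C} (T : MonoidalMonad M).
Local Notation "f ⊗ g" := (tensm M f g) (at level 35).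
Local Notation I := (munit M).
Local Notation F := (mT (mmon T)).
Local Notation mu := (mu (mmon T)).
Local Notation eta := (eta (mmon T)).

Lemma tsplit {X X' Y Y' : C} (f : Hom X Y) (g : Hom X' Y') :
  f ⊗ g = (f ⊗ cid Y') ∘ (cid X ⊗ g).
Proof. rewrite <- tens_comp, comp_id_l, comp_id_r. reflexivity. Qed.
Lemma tsplit' {X X' Y Y' : C} (f : Hom X Y) (g : Hom X' Y') :
  f ⊗ g = (cid Y ⊗ g) ∘ (f ⊗ cid X').
Proof. rewrite <- tens_comp, comp_id_l, comp_id_r. reflexivity. Qed.

Lemma kc_assoc X Y Z W (f : Hom X (TT T Y)) (g : Hom Y (TT T Z)) (h : Hom Z (TT T W)) :
  kcomp T h (kcomp T g f) = kcomp T (kcomp T h g) f.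
Proof.
  unfold kcomp, Tm, TT. rewrite !fm_comp. nrm.
  rw (mu_nat (mmon T) h). rw (mu_assoc (mmon T) W). reflexivity.
Qed.
Lemma kc_id_l X Y (f : Hom X (TT T Y)) : kcomp T (kid T Y) f = f.
Proof. unfold kcomp, kid, Tm, TT. rewrite mu_eta_r, comp_id_l. reflexivity. Qed.
Lemma kc_id_r X Y (f : Hom X (TT T Y)) : kcomp T f (kid T X) = f.
Proof. unfold kcomp, kid, Tm, TT. rw (eta_nat (mmon T) f). rewrite mu_eta_l, comp_id_l. reflexivity. Qed.

Definition KC : Category := {|
  Ob := C; Hom := fun X Y => Hom X (TT T Y); cid := kid T;
  comp := fun X Y Z g f => kcomp T g f;
  comp_id_l := kc_id_l; comp_id_r := kc_id_r; comp_assoc := kc_assoc |}.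

Definition J {X Y : C} (h : Hom X Y) : @Hom KC X Y := eta Y ∘ h.

Lemma JJ {X Y Z : C} (h : Hom X Y) (k : Hom Y Z) : @comp KC _ _ _ (J k) (J h) = J (k ∘ h).
Proof. unfold J; simpl; unfold kcomp, Tm, TT. rewrite fm_comp. nrm. rw (mu_eta_r (mmon T) Z).
  rw (eta_nat (mmon T) k). rewrite comp_id_l. reflexivity. Qed.
Lemma Jid (X : C) : J (cid X) = @cid KC X.
Proof. unfold J; simpl; unfold kid. apply comp_id_r. Qed.

Lemma ktens_comp {X X' Y Y' Z Z' : C} (f : @Hom KC X Y) (g : @Hom KC Y Z)
  (f' : @Hom KC X' Y') (g' : @Hom KC Y' Z') :
  ktens T (@comp KC _ _ _ g f) (@comp KC _ _ _ g' f')
  = @comp KC _ _ _ (ktens T g g') (ktens T f f').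
Proof.
  simpl. unfold ktens, kcomp, Tm, TT. rewrite !tens_comp, !fm_comp. nrm.
  rw (phi_nat T g g'). rw (mu_monoidal T Z Z'). reflexivity.
Qed.

Lemma ktens_id (X Y : C) : ktens T (kid T X) (kid T Y) = kid T (tens M X Y).
Proof. unfold ktens, kid. apply eta_monoidal. Qed.

Lemma klunit_nat {X Y : C} (f : Hom X (fo F Y)) :
  @comp KC _ _ _ (klunit T Y) (ktens T (kid T I) f) = @comp KC _ _ _ f (klunit T X).
Proof.
  simpl. unfold klunit, ktens, kcomp, kid, Tm, TT. rewrite !fm_comp. nrm.
  rewrite mu_eta_r, comp_id_l. rewrite (tsplit (eta I)). nrm.
  rewrite eta_monoidal0. Fail rewrite (px5 (phi_lunit T Y)). Fail rewrite (px4 (phi_lunit T Y)). rw (phi_lunit T Y). rw (lunit_nat M f).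
  rw (eta_nat (mmon T) f). rewrite mu_eta_l, comp_id_l. reflexivity.
Qed.

Lemma krunit_nat {X Y : C} (f : Hom X (fo F Y)) :
  @comp KC _ _ _ (krunit T Y) (ktens T f (kid T I)) = @comp KC _ _ _ f (krunit T X).
Proof.
  simpl. unfold krunit, ktens, kcomp, kid, Tm, TT. rewrite !fm_comp. nrm.
  rewrite mu_eta_r, comp_id_l. rewrite (tsplit' f (eta I)). nrm.
  rewrite eta_monoidal0. rw (phi_runit T Y). rw (runit_nat M f).
  rw (eta_nat (mmon T) f). rewrite mu_eta_l, comp_id_l. reflexivity.
Qed.

Lemma klunit_krunit : klunit T I = krunit T I.
Proof. unfold klunit, krunit. rewrite lunit_runit. reflexivity. Qed.
End Kl.

Section Wr.
Context {C : Category} {M : Monoidal C} {T : MonoidalMonad M} (W : OpmonoidalMixedOpwreath T).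
Local Notation I := (munit M).
Local Notation F := (mT (mmon T)).
Local Notation G := (wG (ow W)).
Local Notation Wr := (ow W).
Local Notation mu := (mu (mmon T)).
Local Notation eta := (eta (mmon T)).
Local Notation "g ⋆ f" := (@comp (KC T) _ _ _ g f) (at level 40, left associativity).
Local Notation KH X Y := (@Hom (KC T) X Y).

Lemma G1 {X Y Z : C} (f : KH X Y) (g : KH Y Z) : Gbar Wr (g ⋆ f) = Gbar Wr g ⋆ Gbar Wr f.
Proof.
  simpl. unfold Gbar, kcomp, Tm, TT. rewrite !fm_comp. nrm.
  rw (ow1 Wr Z). rw <- (zeta_nat Wr g). reflexivity.
Qed.

Lemma G2 {X Y : C} (h : Hom X Y) : Gbar Wr (J T h) = J T (fm G h).
Proof. unfold Gbar, J. rewrite fm_comp. nrm. rw (ow2 Wr Y). reflexivity. Qed.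

Lemma E1 {X Y : C} (f : KH X Y) : eps Wr Y ⋆ Gbar Wr f = f ⋆ eps Wr X.
Proof.
  simpl. unfold Gbar, kcomp, Tm, TT. nrm.
  rw <- (ow3 Wr Y). rw <- (eps_nat Wr f). reflexivity.
Qed.

Lemma D1 {X Y : C} (f : KH X Y) : delta Wr Y ⋆ Gbar Wr f = Gbar Wr (Gbar Wr f) ⋆ delta Wr X.
Proof.
  simpl. unfold Gbar, kcomp, Tm, TT. rewrite !fm_comp. nrm.
  rw <- (ow4 Wr Y). rw <- (delta_nat Wr f). reflexivity.
Qed.

Lemma C1 (X : C) : eps Wr (fo G X) ⋆ delta Wr X = @cid (KC T) _.
Proof. simpl. unfold kcomp. apply ow6. Qed.

Lemma C2 (X : C) : Gbar Wr (eps Wr X) ⋆ delta Wr X = @cid (KC T) _.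
Proof. simpl. unfold Gbar, kcomp. unfold Tm. rewrite fm_comp. nrm. apply ow7. Qed.

Lemma Mk {X Y Z : C} (f : Hom (fo G X) (TT T Y)) (g : Hom (fo G Y) (TT T Z)) :
  mkl_comp Wr f g = g ⋆ Gbar Wr f ⋆ delta Wr X.
Proof. simpl. unfold mkl_comp, Gbar, kcomp, Tm, TT. rewrite !fm_comp. nrm. reflexivity. Qed.
End Wr.

Section Main.
Context {C : Category} {M : Monoidal C} {T : MonoidalMonad M} (W : OpmonoidalMixedOpwreath T).
Local Notation I := (munit M).
Local Notation G := (wG (ow W)).
Local Notation Wr := (ow W).
Local Notation "g ⋆ f" := (@comp (KC T) _ _ _ g f) (at level 40, left associativity).
Local Notation KH X Y := (@Hom (KC T) X Y).
Local Notation kt := (ktens T).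
Local Notation P := (psi W I I).
Local Notation D := (delta Wr).
Local Notation Gb := (Gbar Wr).
Local Notation e := (eps Wr I).

Lemma psi_natK {X X' Y Y' : C} (f : KH X X') (g : KH Y Y') :
  kt (Gb f) (Gb g) ⋆ psi W X Y = psi W X' Y' ⋆ Gb (kt f g).
Proof. exact (psi_nat W f g). Qed.
Lemma delta_opK (X Y : C) :
  psi W (fo G X) (fo G Y) ⋆ Gb (psi W X Y) ⋆ D (tens M X Y) = kt (D X) (D Y) ⋆ psi W X Y.
Proof. exact (delta_opmonoidal W X Y). Qed.
Lemma lcounitK (X : C) :
  klunit T (fo G X) ⋆ kt (psi0 W) (@cid (KC T) (fo G X)) ⋆ psi W I X = Gb (klunit T X).
Proof. rewrite <- comp_assoc. exact (psi_lcounit W X). Qed.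
Lemma rcounitK (X : C) :
  krunit T (fo G X) ⋆ kt (@cid (KC T) (fo G X)) (psi0 W) ⋆ psi W X I = Gb (krunit T X).
Proof. rewrite <- comp_assoc. exact (psi_rcounit W X). Qed.
Lemma klunit_natK {X Y : C} (f : KH X Y) :
  klunit T Y ⋆ kt (@cid (KC T) I) f = f ⋆ klunit T X.
Proof. exact (klunit_nat T f). Qed.
Lemma krunit_natK {X Y : C} (f : KH X Y) :
  krunit T Y ⋆ kt f (@cid (KC T) I) = f ⋆ krunit T X.
Proof. exact (krunit_nat T f). Qed.
Lemma eps_psi0 : e = psi0 W.
Proof. rewrite <- (eps_opmonoidal0 W). symmetry. exact (comp_id_l (c:=KC T) e). Qed.

Lemma IC (f f' g g' : KH (fo G I) I) :
  kt g g' ⋆ P ⋆ Gb (kt f f' ⋆ P) ⋆ D (tens M I I)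
  = kt (g ⋆ Gb f ⋆ D I) (g' ⋆ Gb f' ⋆ D I) ⋆ P.
Proof.
  rewrite G1. nrm. rw <- (psi_natK f f'). rw (delta_opK I I).
  rewrite !ktens_comp. reflexivity.
Qed.

Lemma U1 (g : KH (fo G I) I) : g ⋆ Gb e ⋆ D I = g.
Proof. rw (C2 W I). apply comp_id_r. Qed.
Lemma U2 (f : KH (fo G I) I) : e ⋆ Gb f ⋆ D I = f.
Proof. rw (E1 W f). rw (C1 W I). apply comp_id_r. Qed.

Lemma L1 (g : KH (fo G I) I) : krunit T I ⋆ kt e g ⋆ P = g ⋆ Gb (krunit T I).
Proof.
  rewrite <- klunit_krunit.
  rewrite eps_psi0.
  rewrite <- (comp_id_l (c:=KC T) (psi0 W)) at 1.
  rewrite <- (comp_id_r (c:=KC T) g) at 1.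
  rewrite ktens_comp. nrm.
  rw (klunit_natK g). rw (lcounitK I). reflexivity.
Qed.
Lemma R1 (f : KH (fo G I) I) : krunit T I ⋆ kt f e ⋆ P = f ⋆ Gb (krunit T I).
Proof.
  rewrite eps_psi0.
  rewrite <- (comp_id_l (c:=KC T) (psi0 W)) at 1.
  rewrite <- (comp_id_r (c:=KC T) f) at 1.
  rewrite ktens_comp. nrm.
  rw (krunit_natK f). rw (rcounitK I). reflexivity.
Qed.

Lemma cancelR {X : C} (x y : KH (fo G I) X) :
  x ⋆ Gb (krunit T I) = y ⋆ Gb (krunit T I) -> x = y.
Proof.
  change (krunit T I) with (J T (runit M I)). rewrite G2.
  intros E.
  rewrite <- (comp_id_r (c:=KC T) x), <- (comp_id_r (c:=KC T) y).
  rewrite <- (Jid T), <- (fm_id G), <- (runit_iso2 M I), fm_comp, <- (JJ T).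
  nrm. rewrite E. reflexivity.
Qed.

Lemma main (f g : KH (fo G I) I) : g ⋆ Gb f ⋆ D I = f ⋆ Gb g ⋆ D I.
Proof.
  set (H := kt f g ⋆ P).
  assert (HA : H = kt e g ⋆ P ⋆ Gb (kt f e ⋆ P) ⋆ D (tens M I I)).
  { rewrite IC, U1, U2. reflexivity. }
  assert (HB : H = kt f e ⋆ P ⋆ Gb (kt e g ⋆ P) ⋆ D (tens M I I)).
  { rewrite IC, U1, U2. reflexivity. }
  assert (EA : krunit T I ⋆ H = g ⋆ Gb f ⋆ D I ⋆ Gb (krunit T I)).
  { rewrite HA. nrm. rw (L1 g). rw <- (G1 W (kt f e ⋆ P) (krunit T I)).
    rw (R1 f). rewrite G1. nrm. rw <- (D1 W (krunit T I)). reflexivity. }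
  assert (EB : krunit T I ⋆ H = f ⋆ Gb g ⋆ D I ⋆ Gb (krunit T I)).
  { rewrite HB. nrm. rw (R1 f). rw <- (G1 W (kt e g ⋆ P) (krunit T I)).
    rw (L1 g). rewrite G1. nrm. rw <- (D1 W (krunit T I)). reflexivity. }
  apply cancelR. rewrite <- EA, <- EB. reflexivity.
Qed.
End Main.

Theorem corollary5p2 (C : Category) (M : Monoidal C) (T : MonoidalMonad M)
  (W : OpmonoidalMixedOpwreath T)
  (f g : Hom (fo (wG (ow W)) (munit M)) (TT T (munit M))) :
  mkl_comp (ow W) f g = mkl_comp (ow W) g f.
Proof. rewrite !Mk. apply main. Qed.
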